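(* Let $E$ be a Banach space over $\mathbb C_p$ and let $c_0(E)$ be the Banach space of sequences $x=(x_0,x_1,x_2,\ldots)$ with $x_j\in E$ and $\|x_j\|_E\to0$, normed by $\|x\|=\sup_{j\ge0}\|x_j\|_E$. Let $T_E$ be the backward shift on $c_0(E)$, $T_E(x_0,x_1,x_2,\ldots)=(x_1,x_2,\ldots)$. Let $A$ be a bounded linear operator on $E$ with $\|A\|\le1$ such that $\|A^nu\|_E\to0$ as $n\to\infty$ for every $u\in E$. Then there exist a closed subspace $Y\subset c_0(E)$ invariant under $T_E$ and a surjective linear isometry $W:E\to Y$ such that $A=W^{-1}T_E^YW$, where $T_E^Y$ denotes the restriction of $T_E$ to $Y$.
   Context: $p$ is a prime and $\mathbb C_p$ is the completion of an algebraic closure of the $p$-adic field $\mathbb Q_p$ with respect to the extension of the $p$-adic absolute value; Banach spaces over $\mathbb C_p$ are non-Archimedean (norm satisfying the ultrametric inequality). *)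

(* Defs.v *)
From HB Require Import structures.
From mathcomp Require Import all_boot all_order all_algebra.
From mathcomp Require Import all_classical all_reals.
Set Implicit Arguments. Unset Strict Implicit. Unset Printing Implicit Defensive.
Import Order.TTheory GRing.Theory Num.Theory.
Local Open Scope ring_scope.
Local Open Scope classical_set_scope.

Definition nonarch_abs (R : realType) (K : fieldType) (abs : K -> R) : Prop :=
  [/\ forall x, 0 <= abs x,
      forall x, abs x = 0 <-> x = 0,
      forall x y, abs (x * y) = abs x * abs y &
      forall x y, abs (x + y) <= Num.max (abs x) (abs y)].

Definition abs_complete (R : realType) (K : fieldType) (abs : K -> R) : Prop :=
  forall u : nat -> K,
    (forall e : R, 0 < e -> exists N, forall m n, (N <= m)%N -> (N <= n)%N ->
        abs (u m - u n) < e) ->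
    exists l, forall e : R, 0 < e -> exists N, forall n, (N <= n)%N ->
        abs (u n - l) < e.

Definition extends_padic (R : realType) (K : fieldType) (abs : K -> R) (p : nat)
  : Prop :=
  forall n : nat, (0 < n)%N -> abs (n%:R) = (p%:R : R) ^- logn p n.

Definition nonarch_banach (R : realType) (K : fieldType) (abs : K -> R)
  (E : lmodType K) (nE : E -> R) : Prop :=
  [/\ forall u, nE u = 0 <-> u = 0,
      forall (a : K) u, nE (a *: u) = abs a * nE u,
      forall u v, nE (u + v) <= Num.max (nE u) (nE v) &
      forall u : nat -> E,
        (forall e : R, 0 < e -> exists N, forall m n, (N <= m)%N -> (N <= n)%N ->
            nE (u m - u n) < e) ->
        exists l, forall e : R, 0 < e -> exists N, forall n, (N <= n)%N ->
            nE (u n - l) < e].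

Definition c0 (R : realType) (K : fieldType) (E : lmodType K) (nE : E -> R)
  (x : nat -> E) : Prop :=
  forall e : R, 0 < e -> exists N, forall j, (N <= j)%N -> nE (x j) < e.

Definition c0norm (R : realType) (K : fieldType) (E : lmodType K) (nE : E -> R)
  (x : nat -> E) : R := sup (range (fun j => nE (x j))).

Definition bshift (E : Type) (x : nat -> E) : nat -> E := fun j => x j.+1.

Definition closed_subspace_c0 (R : realType) (K : fieldType) (E : lmodType K)
  (nE : E -> R) (Y : set (nat -> E)) : Prop :=
  [/\ Y `<=` c0 nE,
      Y (fun _ => 0),
      forall x y, Y x -> Y y -> Y (fun j => x j + y j),
      forall (a : K) x, Y x -> Y (fun j => a *: x j) &
      forall (xs : nat -> nat -> E) (x : nat -> E),
        (forall n, Y (xs n)) -> c0 nE x ->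
        (forall e : R, 0 < e -> exists N, forall n, (N <= n)%N ->
            c0norm nE (fun j => xs n j - x j) < e) ->
        Y x].

(* Main.v *)
Require Import Defs.
From HB Require Import structures.
From mathcomp Require Import all_boot all_order all_algebra.
From mathcomp Require Import all_classical all_reals.
From mathcomp Require Import lra.
Import Order.TTheory GRing.Theory Num.Theory.
Local Open Scope ring_scope.
Local Open Scope classical_set_scope.

Lemma fin_bound (R : realType) (f : nat -> R) (N : nat) :
  exists M, forall j, (j < N)%N -> f j <= M.
Proof.
elim: N => [|N [M HM]]; first by exists 0 => j.
exists (Num.max M (f N)) => j; rewrite ltnS leq_eqVlt => /orP [/eqP ->|hj].
  by rewrite le_max lexx orbT.
by rewrite le_max HM.
Qed.

Lemma c0_ub (R : realType) (K : fieldType) (E : lmodType K) (nE : E -> R)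
  (x : nat -> E) : c0 nE x -> has_ubound (range (fun j => nE (x j))).
Proof.
move=> /(_ 1 ltr01) [N HN].
have [M HM] := @fin_bound R (fun j => nE (x j)) N.
exists (Num.max M 1) => _ [j _ <-].
case: (ltnP j N) => hj; first by rewrite le_max HM.
by rewrite le_max (ltW (HN j hj)) orbT.
Qed.

Arguments fin_bound {R}.
Arguments c0_ub {R K E nE x}.

Theorem theorem3 (R : realType) (p : nat) (K : closedFieldType) (abs : K -> R)
  (E : lmodType K) (nE : E -> R) (A : {linear E -> E}) :
  prime p -> nonarch_abs abs -> abs_complete abs -> extends_padic abs p ->
  nonarch_banach abs nE ->
  (forall u, nE (A u) <= nE u) ->
  (forall u, forall e : R, 0 < e -> exists N, forall n, (N <= n)%N ->
      nE (iter n A u) < e) ->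
  exists (Y : set (nat -> E)) (W : E -> nat -> E),
    closed_subspace_c0 nE Y /\
    (forall x, Y x -> Y (bshift x)) /\
    (forall (a : K) u v j, W (a *: u + v) j = a *: W u j + W v j) /\
    (forall u, Y (W u)) /\
    (forall y, Y y -> exists u, W u = y) /\
    (forall u, c0norm nE (W u) = nE u) /\
    (forall u, W (A u) = bshift (W u)).
Proof.
move=> _ [a0 a1 aM aU] _ _ [n1 nZ nU _] Acontr Ato0.
have abs1 : abs 1 = 1.
  have h := aM 1 1; rewrite mulr1 in h.
  have hn : abs 1 != 0 by apply/eqP => /a1 /eqP; rewrite oner_eq0.
  by apply: (mulIf hn); rewrite mul1r -h.
have absN1 : abs (-1) = 1.
  have h := aM (-1) (-1); rewrite mulrNN mulr1 abs1 in h.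
  have := a0 (-1); nra.
have nN : forall u, nE (- u) = nE u.
  by move=> u; rewrite -scaleN1r nZ absN1 mul1r.
have n0 : forall u, 0 <= nE u.
  move=> u; have := nU u (- u); rewrite subrr nN maxxx.
  by have -> : nE 0 = 0 by apply/n1.
have nB : forall u v, nE (u - v) <= Num.max (nE u) (nE v).
  by move=> u v; rewrite -(nN v); apply: nU.
have iterL : forall j (a : K) u v,
    iter j A (a *: u + v) = a *: iter j A u + iter j A v.
  by elim=> [//|j IH] a u v; rewrite !iterS IH linearP.
have iterC : forall j u, nE (iter j A u) <= nE u.
  elim=> [//|j IH] u; rewrite iterS; exact: le_trans (Acontr _) (IH u).
pose W := fun u j => iter j A u.
have Wc0 : forall u, c0 nE (W u) by move=> u e he; exact: Ato0.
have Wlin : forall (a : K) u v, W (a *: u + v) = fun j => a *: W u j + W v j.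
  by move=> a u v; apply: funext => j; exact: iterL.
have le_norm : forall x j, c0 nE x -> nE (x j) <= c0norm nE x.
  by move=> x j hx; apply: (ub_le_sup (c0_ub hx)); exists j.
exists (range W), W; split; last split; last split; last split; last split;
  last split.
- split.
  + by move=> _ [u _ <-]; apply: Wc0.
  + exists 0 => //; apply: funext => j.
    by rewrite /W; elim: j => [//|j IH]; rewrite iterS IH linear0.
  + move=> _ _ [u _ <-] [v _ <-]; exists (u + v) => //.
    by apply: funext => j; rewrite /W -[u]scale1r iterL !scale1r.
  + move=> a _ [u _ <-]; exists (a *: u) => //.
    apply: funext => j; rewrite /W -[a *: u]addr0 iterL.
    suff -> : iter j A 0 = 0 by rewrite addr0.
    by elim: j => [//|j IH]; rewrite iterS IH linear0.
  + move=> xs x hxs hx hconv.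
    exists (x 0%N) => //; apply: funext => j.
    apply/eqP; rewrite -subr_eq0; apply/eqP/n1.
    apply/eqP; rewrite eq_le n0 andbT.
    apply/ler_addgt0Pr => e he; rewrite add0r.
    have [N HN] := hconv e he.
    have [u _ Hu] := hxs N.
    have hd : c0 nE (fun j => xs N j - x j).
      move=> e' he'; have [N1 H1] := (Wc0 u) e' he'; have [N2 H2] := hx e' he'.
      exists (maxn N1 N2) => k hk; apply: le_lt_trans (nB _ _) _.
      rewrite gt_max -Hu H1 ?H2 //; [exact: leq_trans (leq_maxr _ _) hk|
        exact: leq_trans (leq_maxl _ _) hk].
    have hlt := HN N (leqnn N).
    have e1 : nE (xs N j - x j) <= e by apply/ltW/(le_lt_trans (le_norm _ j hd)).
    have e2 : nE (xs N 0%N - x 0%N) <= e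
      by apply/ltW/(le_lt_trans (le_norm _ 0%N hd)).
    have : W (x 0%N) j - x j =
        - (W (xs N 0%N - x 0%N) j) + (xs N j - x j).
      have iterB : forall k u1 v1, iter k A (u1 - v1) = iter k A u1 - iter k A v1.
        by elim=> [//|k IH] u1 v1; rewrite !iterS IH linearB.
      rewrite /W iterB -Hu /W /= -/(W u j) Hu.
      by rewrite opprB addrA subrK.
    move=> ->; apply: le_trans (nU _ _) _; rewrite nN ge_max e1 andbT.
    apply: le_trans (iterC _ _) _.
    exact: e2.
- by move=> _ [u _ <-]; exists (A u) => //; apply: funext => j;
    rewrite /bshift /W iterSr.
- by move=> a u v j; rewrite Wlin.
- by move=> u; exists u.
- by move=> y [u _ <-]; exists u.
- move=> u; apply/eqP; rewrite eq_le; apply/andP; split.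
    by apply: ge_sup; [exists (nE u), 0%N|move=> _ [j _ <-]; apply: iterC].
  exact: (le_norm (W u) 0%N (Wc0 u)).
- by move=> u; apply: funext => j; rewrite /bshift /W iterSr.
Qed.
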